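(* Let $r\ge 2$ and, for $1\le j\le r$, let $(\alpha^{[j]}_{h})_{h\in\mathbb{N}}$ be sequences of positive reals with $\alpha^{[j]}_h\neq\alpha^{[j]}_\ell$ for $1\le h<\ell<\infty$, and set $\alpha^{[j]}_0=0$. In the $r$-type urn model I with these weights, started from $\mathbf{n}=(n_1,\dots,n_r)$ with all $n_j\ge1$, let $\mathbf{X}_{\mathbf{n}}=(X^{[1]}_{\mathbf{n}},\dots,X^{[r-1]}_{\mathbf{n}})$. Then for all $\mathbf{k}=(k_1,\dots,k_{r-1})$ with $0\le k_j\le n_j$, \[ \mathbb{P}\{\mathbf{X}_{\mathbf{n}}=\mathbf{k}\}=\sum_{\ell_1=k_1}^{n_1}\cdots\sum_{\ell_{r-1}=k_{r-1}}^{n_{r-1}}\frac{\Big(\prod_{f=1}^{n_r}\alpha^{[r]}_f\Big)\prod_{j=1}^{r-1}\Big(\prod_{h_j=k_j+1}^{n_j}\alpha^{[j]}_{h_j}\Big)}{\Big(\prod_{f=1}^{n_r}\big(\alpha^{[r]}_f+\sum_{j=1}^{r-1}\alpha^{[j]}_{\ell_j}\big)\Big)\prod_{j=1}^{r-1}\Big(\prod_{\substack{h_j=k_j\\ h_j\neq\ell_j}}^{n_j}\big(\alpha^{[j]}_{h_j}-\alpha^{[j]}_{\ell_j}\big)\Big)}. \]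
   Context: $r$-type urn model I: the urn contains balls of types $1,\dots,r$, initially $n_j$ balls of type $j$. At each step, if the urn contains $n'_j$ balls of type $j$ ($1\le j\le r$), a ball of type $\ell$ is drawn with probability $\alpha^{[\ell]}_{n'_\ell}/\sum_{j=1}^{r}\alpha^{[j]}_{n'_j}$ and discarded. The process stops when either all type $r$ balls have been drawn or all balls of types $1,\dots,r-1$ have been drawn (absorbing states $(n'_1,\dots,n'_{r-1},0)$ and $(0,\dots,0,n'_r)$). $X^{[j]}_{\mathbf{n}}$ is the number of type $j$ balls in the urn when the process stops. Empty products equal $1$. *)

(* Defs.v *)
From HB Require Import structures.
From mathcomp Require Import all_boot all_order all_algebra.
From mathcomp Require Import reals.
Set Implicit Arguments. Unset Strict Implicit. Unset Printing Implicit Defensive.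
Import Order.TTheory GRing.Theory Num.Theory.
Local Open Scope ring_scope.

(* Urn model I with r = m.+1 types.  Types 1..r-1 are indexed by 'I_m,
   the state of these types is a : 'I_m -> nat; type r is the last type,
   with b balls.  alpha j h = alpha^{[j]}_h (j : 'I_m), beta h = alpha^{[r]}_h. *)

Definition decr (m : nat) (a : 'I_m -> nat) (j : 'I_m) : 'I_m -> nat :=
  fun i => if i == j then (a i).-1 else a i.

Definition absorbing (m : nat) (a : 'I_m -> nat) (b : nat) : bool :=
  (b == 0%N) || [forall j, a j == 0%N].

(* urnP fuel a b k = probability that, started from (a, b), the process stops
   with X^{[j]} = k j for all j < r (fuel large enough: total number of balls). *)
Fixpoint urnP (R : realType) (m : nat) (alpha : 'I_m -> nat -> R)
    (beta : nat -> R) (fuel : nat) (a : 'I_m -> nat) (b : nat)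
    (k : 'I_m -> nat) {struct fuel} : R :=
  if absorbing a b then (if [forall j, a j == k j] then 1 else 0)
  else match fuel with
  | 0%N => 0
  | f.+1 =>
      let W := \sum_(j < m) alpha j (a j) + beta b in
      \sum_(j < m) (alpha j (a j) / W) * urnP alpha beta f (decr a j) b k
      + (beta b / W) * urnP alpha beta f a b.-1 k
  end.

Definition urn_prob (R : realType) (m : nat) (alpha : 'I_m -> nat -> R)
    (beta : nat -> R) (a : 'I_m -> nat) (b : nat) (k : 'I_m -> nat) : R :=
  urnP alpha beta (\sum_(j < m) a j + b)%N a b k.

(* Main.v *)
Require Import Defs.
From HB Require Import structures.
From mathcomp Require Import all_boot all_order all_algebra.
From mathcomp Require Import reals.
From mathcomp Require Import zify ring lra.
Import Order.TTheory GRing.Theory Num.Theory.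
Set Implicit Arguments. Unset Strict Implicit. Unset Printing Implicit Defensive.
Local Open Scope ring_scope.

Definition incr (m : nat) (a : 'I_m -> nat) (j : 'I_m) : 'I_m -> nat :=
  fun i => if i == j then (a i).+1 else a i.

Definition filt m N (k a : 'I_m -> nat) (l : {ffun 'I_m -> 'I_N.+1}) : bool :=
  [forall j, (k j <= l j <= a j)%N].

Definition Qp (R : realType) m N (alpha : 'I_m -> nat -> R) (k a : 'I_m -> nat)
  (l : {ffun 'I_m -> 'I_N.+1}) : R :=
  \prod_(j < m) \prod_(k j <= h < (a j).+1 | h != l j) (alpha j h - alpha j (l j)).

Definition Ap (R : realType) m (alpha : 'I_m -> nat -> R) (k a : 'I_m -> nat) : R :=
  \prod_(j < m) \prod_((k j).+1 <= h < (a j).+1) alpha j h.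

Definition Sl (R : realType) m N (alpha : 'I_m -> nat -> R) (l : {ffun 'I_m -> 'I_N.+1}) : R :=
  \sum_(j < m) alpha j (l j).

Definition Bp (R : realType) (beta : nat -> R) b : R := \prod_(1 <= f < b.+1) beta f.
Definition Pp (R : realType) (beta : nat -> R) (s : R) b : R :=
  \prod_(1 <= f < b.+1) (beta f + s).

Definition G (R : realType) m N (alpha : 'I_m -> nat -> R) (beta : nat -> R)
   (k a : 'I_m -> nat) b : R :=
  \sum_(l : {ffun 'I_m -> 'I_N.+1} | filt k a l)
    (Bp beta b * Ap alpha k a) / (Pp beta (Sl alpha l) b * Qp alpha k a l).

Lemma prod_up (R : realType) (F : nat -> R) k a l : (k <= a)%N -> a != l ->
  \prod_(k <= h < a.+1 | h != l) F h = (\prod_(k <= h < a | h != l) F h) * F a.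
Proof. by move=> ka al; rewrite big_mkcond big_nat_recr //= al -big_mkcond. Qed.

Lemma prod_low (R : realType) (F : nat -> R) k a l : (k <= a)%N -> k != l ->
  \prod_(k <= h < a.+1 | h != l) F h = F k * \prod_(k.+1 <= h < a.+1 | h != l) F h.
Proof. by move=> ka kl; rewrite big_mkcond big_ltn //= kl -big_mkcond. Qed.

Lemma sum_decr m (a : 'I_m -> nat) j : (0 < a j)%N ->
  (\sum_i a i = (\sum_i decr a j i).+1)%N.
Proof.
move=> aj; rewrite (bigD1 j) //= [X in _ = X.+1](bigD1 j) //=.
have -> : (\sum_(i < m | i != j) decr a j i = \sum_(i < m | i != j) a i)%N.
  by apply: eq_bigr => i /negPf; rewrite /decr => ->.
rewrite /decr eqxx; move: (\sum_(i < m | i != j) a i)%N => s; lia.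
Qed.

Lemma Qp_up (R : realType) m N (alpha : 'I_m -> nat -> R) k a
  (l : {ffun 'I_m -> 'I_N.+1}) j : (k j < a j)%N -> a j != l j ->
  Qp alpha k a l = Qp alpha k (decr a j) l * (alpha j (a j) - alpha j (l j)).
Proof.
move=> ka al; rewrite /Qp (bigD1 j) //= [in RHS](bigD1 j) //=.
have -> : decr a j j = (a j).-1 by rewrite /decr eqxx.
rewrite prednK; last by lia.
rewrite prod_up //; last by lia.
rewrite -!mulrA; congr (_ * _); rewrite mulrC; congr (_ * _).
by apply: eq_bigr => i /negPf ij; rewrite /decr ij.
Qed.

Lemma Qp_low (R : realType) m N (alpha : 'I_m -> nat -> R) k a
  (l : {ffun 'I_m -> 'I_N.+1}) j : (k j <= a j)%N -> k j != l j ->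
  Qp alpha k a l = (alpha j (k j) - alpha j (l j)) * Qp alpha (incr k j) a l.
Proof.
move=> ka kl; rewrite /Qp (bigD1 j) //= [in RHS](bigD1 j) //=.
have -> : incr k j j = (k j).+1 by rewrite /incr eqxx.
rewrite prod_low // -!mulrA; congr (_ * _); congr (_ * _).
by apply: eq_bigr => i /negPf ij; rewrite /incr ij.
Qed.

Lemma Ap_up (R : realType) m (alpha : 'I_m -> nat -> R) k a j : (k j < a j)%N ->
  Ap alpha k a = Ap alpha k (decr a j) * alpha j (a j).
Proof.
move=> ka; rewrite /Ap (bigD1 j) //= [in RHS](bigD1 j) //=.
have -> : decr a j j = (a j).-1 by rewrite /decr eqxx.
rewrite prednK; last by lia.
rewrite big_nat_recr //= -!mulrA; congr (_ * _); rewrite mulrC; congr (_ * _).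
by apply: eq_bigr => i /negPf ij; rewrite /decr ij.
Qed.

Lemma alpha_neq (R : realType) m (alpha : 'I_m -> nat -> R)
    (halpha0 : forall j, alpha j 0%N = 0)
    (halpha_pos : forall j h, (1 <= h)%N -> 0 < alpha j h)
    (halpha_inj : forall j h l, (1 <= h)%N -> (h < l)%N -> alpha j h != alpha j l) :
  forall j h l, h != l -> alpha j h != alpha j l.
Proof.
have H : forall j h l, (h < l)%N -> alpha j h != alpha j l.
  move=> j [|h] l hl; last exact: halpha_inj.
  by rewrite halpha0 eq_sym gt_eqF // halpha_pos; lia.
move=> j h l; case: (ltngtP h l) => // hl _; first exact: H.
by rewrite eq_sym H.
Qed.

Lemma alpha_ge0 (R : realType) m (alpha : 'I_m -> nat -> R)
    (halpha0 : forall j, alpha j 0%N = 0)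
    (halpha_pos : forall j h, (1 <= h)%N -> 0 < alpha j h) j h : 0 <= alpha j h.
Proof. by case: h => [|h]; [rewrite halpha0 | apply/ltW/halpha_pos]. Qed.

Lemma Qp_neq0 (R : realType) m N (alpha : 'I_m -> nat -> R)
  (ainj : forall j h l, h != l -> alpha j h != alpha j l) k a
  (l : {ffun 'I_m -> 'I_N.+1}) : Qp alpha k a l != 0.
Proof.
rewrite /Qp; apply: (big_ind (fun x : R => x != 0)) => //; first exact: oner_neq0.
  by move=> x y; apply: mulf_neq0.
move=> j _; apply: (big_ind (fun x : R => x != 0)) => //; first exact: oner_neq0.
  by move=> x y; apply: mulf_neq0.
by move=> h hl; rewrite subr_eq0 ainj.
Qed.

Lemma Pp_gt0 (R : realType) (beta : nat -> R)
  (hbeta_pos : forall h, (1 <= h)%N -> 0 < beta h) s b : 0 <= s -> 0 < Pp beta s b.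
Proof.
move=> s0; rewrite /Pp big_nat_cond; apply: (big_ind (fun x : R => 0 < x)) => //.
  by move=> x y; apply: mulr_gt0.
by move=> i /andP [/andP [hi _] _]; apply: ltr_wpDr => //; exact: hbeta_pos.
Qed.

Lemma Bp_gt0 (R : realType) (beta : nat -> R)
  (hbeta_pos : forall h, (1 <= h)%N -> 0 < beta h) b : 0 < Bp beta b.
Proof.
rewrite /Bp big_nat_cond; apply: (big_ind (fun x : R => 0 < x)) => //.
  by move=> x y; apply: mulr_gt0.
by move=> i /andP [/andP [hi _] _]; rewrite hbeta_pos.
Qed.

Lemma Sl_ge0 (R : realType) m N (alpha : 'I_m -> nat -> R)
    (halpha0 : forall j, alpha j 0%N = 0)
    (halpha_pos : forall j h, (1 <= h)%N -> 0 < alpha j h)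
    (l : {ffun 'I_m -> 'I_N.+1}) : 0 <= Sl alpha l.
Proof. by apply: sumr_ge0 => j _; apply: alpha_ge0. Qed.

Lemma I1 (R : realType) m N (alpha : 'I_m -> nat -> R) (beta : nat -> R)
    (halpha0 : forall j, alpha j 0%N = 0)
    (halpha_pos : forall j h, (1 <= h)%N -> 0 < alpha j h)
    (hbeta_pos : forall h, (1 <= h)%N -> 0 < beta h)
    (ainj : forall j h l, h != l -> alpha j h != alpha j l) k a b
    (l : {ffun 'I_m -> 'I_N.+1}) :
  beta b.+1 * (if filt k a l then (Bp beta b * Ap alpha k a) / (Pp beta (Sl alpha l) b * Qp alpha k a l) else 0)
  = (if filt k a l then (Bp beta b.+1 * Ap alpha k a) / (Pp beta (Sl alpha l) b.+1 * Qp alpha k a l) else 0)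
     * (beta b.+1 + Sl alpha l).
Proof.
case: ifP => _; last by rewrite mulr0 mul0r.
have S0 := Sl_ge0 halpha0 halpha_pos l.
have P0 := Pp_gt0 hbeta_pos b S0.
have Q0 := Qp_neq0 ainj k a l.
have bS0 : beta b.+1 + Sl alpha l != 0.
  by rewrite gt_eqF // ltr_wpDr // hbeta_pos.
rewrite /Bp /Pp !(big_nat_recr _ _ _ (isT : (1 <= b.+1)%N)) /= -/(Bp beta b) -/(Pp beta _ b).
move: P0 bS0 Q0; set P := Pp _ _ _; set Q := Qp _ _ _ _; set x := _ + _ => P0 x0 Q0.
have P0' : P != 0 by rewrite gt_eqF.
by field; rewrite ?P0' ?x0 ?Q0.
Qed.

Lemma filt_decr m N k (a : 'I_m -> nat) (l : {ffun 'I_m -> 'I_N.+1}) j : (0 < a j)%N ->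
  filt k (decr a j) l = filt k a l && (l j != a j :> nat).
Proof.
move=> aj; rewrite /filt; apply/forallP/andP => [H|[/forallP H1 H2] i].
  split; last by have := H j; rewrite /decr eqxx; lia.
  apply/forallP => i; have := H i; rewrite /decr; case: eqP => [->|_] //; lia.
have := H1 i; rewrite /decr; case: eqP => [->|_] //; lia.
Qed.

Lemma filt_incr m N k (a : 'I_m -> nat) (l : {ffun 'I_m -> 'I_N.+1}) j :
  filt (incr k j) a l = filt k a l && (l j != k j :> nat).
Proof.
rewrite /filt; apply/forallP/andP => [H|[/forallP H1 H2] i].
  split; last by have := H j; rewrite /incr eqxx; lia.
  apply/forallP => i; have := H i; rewrite /incr; case: eqP => [->|_] //; lia.
have := H1 i; rewrite /incr; case: eqP => [->|_] //; lia.
Qed.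

Lemma I2 (R : realType) m N (alpha : 'I_m -> nat -> R) (beta : nat -> R)
    (halpha0 : forall j, alpha j 0%N = 0)
    (halpha_pos : forall j h, (1 <= h)%N -> 0 < alpha j h)
    (hbeta_pos : forall h, (1 <= h)%N -> 0 < beta h)
    (ainj : forall j h l, h != l -> alpha j h != alpha j l) k a b
    (l : {ffun 'I_m -> 'I_N.+1}) j :
  alpha j (a j) * (if filt k (decr a j) l then (Bp beta b * Ap alpha k (decr a j))
        / (Pp beta (Sl alpha l) b * Qp alpha k (decr a j) l) else 0)
  = (if filt k a l then (Bp beta b * Ap alpha k a) / (Pp beta (Sl alpha l) b * Qp alpha k a l) else 0)
     * (alpha j (a j) - alpha j (l j)).
Proof.
have [aj0|ajp] := posnP (a j).
  rewrite aj0 halpha0 mul0r; case: ifP => [/forallP/(_ j)|]; last by rewrite mul0r.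
  by rewrite aj0 => /andP [_]; rewrite leqn0 => /eqP ->; rewrite halpha0 subrr mulr0.
rewrite filt_decr //; case Hf: (filt k a l) => /=; last by rewrite !(mulr0, mul0r).
case: eqP => [la|/eqP la] /=; first by rewrite la subrr !mulr0.
have kl : (k j < a j)%N.
  by move/forallP: Hf => /(_ j); move: la; lia.
rewrite (@Qp_up _ _ _ alpha k a l j kl); last by rewrite eq_sym.
rewrite (@Ap_up _ _ alpha k a j kl).
have S0 := Sl_ge0 halpha0 halpha_pos l.
have P0 := Pp_gt0 hbeta_pos b S0.
have Q0 := Qp_neq0 ainj k (decr a j) l.
have d0 : alpha j (a j) - alpha j (l j) != 0 by rewrite subr_eq0 ainj // eq_sym.
move: P0 Q0 d0; set P := Pp _ _ _; set Q := Qp _ _ _ _; set x := _ - _ => P0 Q0 x0.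
have P0' : P != 0 by rewrite gt_eqF.
by field; rewrite ?P0' ?x0 ?Q0.
Qed.
Lemma Rec (R : realType) m N (alpha : 'I_m -> nat -> R) (beta : nat -> R)
    (halpha0 : forall j, alpha j 0%N = 0)
    (halpha_pos : forall j h, (1 <= h)%N -> 0 < alpha j h)
    (hbeta_pos : forall h, (1 <= h)%N -> 0 < beta h)
    (ainj : forall j h l, h != l -> alpha j h != alpha j l) k a b :
  (\sum_(j < m) alpha j (a j) + beta b.+1) * G N alpha beta k a b.+1
  = \sum_(j < m) alpha j (a j) * G N alpha beta k (decr a j) b.+1
    + beta b.+1 * G N alpha beta k a b.
Proof.
rewrite /G.
under [X in _ = X + _]eq_bigr => j _ do rewrite big_mkcond mulr_sumr.
under [X in _ = X + _]eq_bigr => j _ do under eq_bigr => l _ do rewrite (I2 halpha0 halpha_pos hbeta_pos ainj).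
rewrite exchange_big /= [X in _ = _ + _ * X]big_mkcond [X in _ = _ + X]mulr_sumr.
under [X in _ = _ + X]eq_bigr => l _ do rewrite (I1 halpha0 halpha_pos hbeta_pos ainj).
rewrite -big_split /= [X in _ * X = _]big_mkcond [LHS]mulr_sumr; apply: eq_bigr => l _.
rewrite -mulr_sumr sumrB /Sl; ring.
Qed.

Definition H (R : realType) m N (alpha : 'I_m -> nat -> R) (k a : 'I_m -> nat) : R :=
  \sum_(l : {ffun 'I_m -> 'I_N.+1} | filt k a l) (Qp alpha k a l)^-1.

Lemma H_rec (R : realType) m N (alpha : 'I_m -> nat -> R)
    (ainj : forall j h l, h != l -> alpha j h != alpha j l) k a j :
  (k j < a j)%N ->
  (alpha j (a j) - alpha j (k j)) * H N alpha k a
  = H N alpha k (decr a j) - H N alpha (incr k j) a.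
Proof.
move=> kaj; rewrite /H [X in _ * X = _]big_mkcond [X in _ = X - _]big_mkcond.
rewrite [X in _ = _ - X]big_mkcond -sumrB mulr_sumr; apply: eq_bigr => l _.
rewrite filt_decr ?(leq_ltn_trans _ kaj) // filt_incr.
case Hf: (filt k a l) => /=; last by rewrite mulr0 subrr.
have Q0 := Qp_neq0 ainj k a l.
have Qd0 := Qp_neq0 ainj k (decr a j) l.
have Qi0 := Qp_neq0 ainj (incr k j) a l.
have ka0 : alpha j (a j) - alpha j (k j) != 0.
  by rewrite subr_eq0 ainj // gt_eqF.
have kaj' := ltnW kaj.
case: eqP => [la|/eqP la]; case: eqP => [lk|/eqP lk] /=.
- by move: kaj; rewrite -la -lk ltnn.
- rewrite (@Qp_low _ _ _ alpha k a l j kaj'); last by rewrite eq_sym.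
  rewrite la.
  have d0 : alpha j (k j) - alpha j (a j) != 0 by rewrite subr_eq0 ainj // ltn_eqF.
  move: Qi0 d0 ka0; set Qi := Qp _ _ _ _ => Qi0 d0 ka0.
  by field; rewrite ?Qi0 ?d0.
- rewrite (@Qp_up _ _ _ alpha k a l j); last by rewrite eq_sym. 2: by [].
  rewrite lk.
  move: Qd0 ka0; set Qd := Qp _ _ _ _ => Qd0 ka0.
  by field; rewrite ?Qd0 ?ka0.
- have e1 := @Qp_up _ _ _ alpha k a l j kaj.
  have e2 := @Qp_low _ _ _ alpha k a l j kaj'.
  rewrite eq_sym in la; rewrite eq_sym in lk.
  move: (e1 la) (e2 lk) Q0 Qd0 Qi0.
  set Q := Qp alpha k a l; set Qd := Qp _ _ _ _; set Qi := Qp _ _ _ _ => E1 E2 Q0 Qd0 Qi0.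
  have d1 : alpha j (a j) - alpha j (l j) != 0 by rewrite subr_eq0 ainj.
  have d2 : alpha j (k j) - alpha j (l j) != 0 by rewrite subr_eq0 ainj.
  have -> : Qd = Q / (alpha j (a j) - alpha j (l j)) by rewrite E1; field.
  have -> : Qi = Q / (alpha j (k j) - alpha j (l j)) by rewrite E2; field.
  by field; rewrite ?Q0 ?d1 ?d2.
Qed.

Lemma sum_lt m (f g : 'I_m -> nat) j : (forall i, f i <= g i)%N -> (f j < g j)%N ->
  (\sum_i f i < \sum_i g i)%N.
Proof.
move=> fg fgj; rewrite (bigD1 j) //= [X in (_ < X)%N](bigD1 j) //=.
have : (\sum_(i < m | i != j) f i <= \sum_(i < m | i != j) g i)%N by apply: leq_sum.
move: (\sum_(i < m | i != j) f i)%N (\sum_(i < m | i != j) g i)%N => x y; lia.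
Qed.

Lemma filt_pred1 m N (k a : 'I_m -> nat) : (forall i, a i == k i) -> (forall i, a i <= N)%N ->
  filt k a =1 pred1 ([ffun i => inord (a i)] : {ffun 'I_m -> 'I_N.+1}).
Proof.
move=> Heq aN l /=; apply/forallP/eqP => [H|->] .
  apply/ffunP => i; apply: val_inj; rewrite ffunE /= inordK; last by have := aN i; lia.
  by have := H i; have := eqP (Heq i); lia.
move=> i; rewrite ffunE inordK; last by have := aN i; lia.
by rewrite (eqP (Heq i)) leqnn.
Qed.

Lemma Qp_eq1 (R : realType) m N (alpha : 'I_m -> nat -> R) (k a : 'I_m -> nat) :
  (forall i, a i == k i) -> (forall i, a i <= N)%N ->
  Qp alpha k a ([ffun i => inord (a i)] : {ffun 'I_m -> 'I_N.+1}) = 1.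
Proof.
move=> Heq aN; rewrite /Qp big1 // => i _.
rewrite ffunE inordK; last by have := aN i; lia.
by rewrite (eqP (Heq i)) big_mkcond big_nat1 eqxx.
Qed.

Lemma Ap_eq1 (R : realType) m (alpha : 'I_m -> nat -> R) (k a : 'I_m -> nat) :
  (forall i, a i == k i) -> Ap alpha k a = 1.
Proof. by move=> Heq; rewrite /Ap big1 // => i _; rewrite (eqP (Heq i)) big_geq. Qed.

Lemma H_val (R : realType) m N (alpha : 'I_m -> nat -> R)
    (ainj : forall j h l, h != l -> alpha j h != alpha j l) n :
  forall k a, (\sum_i (a i - k i) <= n)%N -> (forall i, k i <= a i <= N)%N ->
  H N alpha k a = if [forall i, a i == k i] then 1 else 0.
Proof.
elim: n => [|n IH] k a hmu hka.
  have [/forallP Heq|/forallPn [j Hj]] := boolP [forall i, a i == k i].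
    rewrite /H (big_pred1 _ (filt_pred1 Heq _)); last by move=> i; have := hka i; lia.
    by rewrite Qp_eq1 ?invr1 // => i; have := hka i; lia.
  have := @sum_lt m (fun i => 0%N) (fun i => a i - k i)%N j (fun i => leq0n _).
  have := hka j; move: Hj hmu; rewrite big1_eq; lia.
have [/forallP Heq|/forallPn [j Hj]] := boolP [forall i, a i == k i].
  rewrite /H (big_pred1 _ (filt_pred1 Heq _)); last by move=> i; have := hka i; lia.
  by rewrite Qp_eq1 ?invr1 // => i; have := hka i; lia.
have kaj : (k j < a j)%N by have := hka j; move: Hj; lia.
have ka0 : alpha j (a j) - alpha j (k j) != 0.
  by rewrite subr_eq0 ainj // gt_eqF.
have -> : H N alpha k a = (H N alpha k (decr a j) - H N alpha (incr k j) a)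
                         / (alpha j (a j) - alpha j (k j)).
  by rewrite -(@H_rec _ _ N alpha ainj k a j kaj) mulrAC divff // mul1r.
rewrite IH; last first.
- move=> i; have := hka i; rewrite /decr; case: eqP => [->|]; lia.
- have := @sum_lt m (fun i => decr a j i - k i)%N (fun i => a i - k i)%N j.
  rewrite /decr eqxx; move: hmu kaj.
  have : forall i, (((if i == j then (a i).-1 else a i) - k i) <= a i - k i)%N.
    by move=> i; case: eqP; lia.
  move=> H1 hmu kaj H2; have := H2 H1; lia.
rewrite IH; last first.
- move=> i; have := hka i; rewrite /incr; case: eqP => [->|]; lia.
- have := @sum_lt m (fun i => a i - incr k j i)%N (fun i => a i - k i)%N j.
  rewrite /incr eqxx; move: hmu kaj.
  have : forall i, ((a i - (if i == j then (k i).+1 else k i)) <= a i - k i)%N.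
    by move=> i; case: eqP; lia.
  move=> H1 hmu kaj H2; have := H2 H1; lia.
have -> : [forall i, decr a j i == k i] = [forall i, a i == incr k j i].
  apply: eq_forallb => i; rewrite /decr /incr; case: (i =P j) => [->|] //.
  by apply/eqP/eqP; lia.
by case: ifP; rewrite subrr mul0r.
Qed.

Lemma filt_le m N (k a : 'I_m -> nat) (l : {ffun 'I_m -> 'I_N.+1}) i :
  filt k a l -> (k i <= l i <= a i)%N.
Proof. by move/forallP. Qed.

Lemma G_b0 (R : realType) m N (alpha : 'I_m -> nat -> R) beta
    (ainj : forall j h l, h != l -> alpha j h != alpha j l) k a :
  (forall i, a i <= N)%N ->
  G N alpha beta k a 0 = if [forall i, a i == k i] then 1 else 0.
Proof.
move=> aN.
have -> : G N alpha beta k a 0 = Ap alpha k a * H N alpha k a.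
  rewrite /G /H mulr_sumr; apply: eq_bigr => l _.
  by rewrite /Bp /Pp !big_geq // !mul1r.
have [/forallP ka|/forallPn [j Hj]] := boolP [forall i, k i <= a i]%N.
  rewrite (@H_val _ _ N alpha ainj (\sum_i (a i - k i))%N) //; last first.
    by move=> i; rewrite ka aN.
  case: ifP => [/forallP Heq|_]; last by rewrite mulr0.
  by rewrite Ap_eq1 // mulr1.
rewrite /H big1; last by move=> l /(filt_le j); move: Hj; lia.
case: ifP => [/forallP Heq|_]; last by rewrite mulr0.
by move: Hj; rewrite (eqP (Heq j)) leqnn.
Qed.

Lemma G_a0 (R : realType) m N (alpha : 'I_m -> nat -> R) beta
    (halpha0 : forall j, alpha j 0%N = 0)
    (hbeta_pos : forall h, (1 <= h)%N -> 0 < beta h) k a b :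
  [forall i, a i == 0%N] ->
  G N alpha beta k a b = if [forall i, a i == k i] then 1 else 0.
Proof.
move=> /forallP a0.
case: ifP => [/forallP Heq|/negbT/forallPn [j Hj]].
  have aN : forall i, (a i <= N)%N by move=> i; rewrite (eqP (a0 i)).
  rewrite /G (big_pred1 _ (filt_pred1 Heq aN)) Qp_eq1 // Ap_eq1 // !mulr1.
  have -> : Sl alpha ([ffun i => inord (a i)] : {ffun 'I_m -> 'I_N.+1}) = 0.
    rewrite /Sl big1 // => i _; rewrite ffunE inordK; last by rewrite (eqP (a0 i)).
    by rewrite (eqP (a0 i)) halpha0.
  have -> : Pp beta 0 b = Bp beta b by rewrite /Pp /Bp; apply: eq_bigr => f _; rewrite addr0.
  by rewrite divff // gt_eqF // Bp_gt0.
rewrite /G big1 // => l /(filt_le j); move: Hj; rewrite (eqP (a0 j)); lia.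
Qed.

Lemma absorbing_case (R : realType) m N (alpha : 'I_m -> nat -> R) beta
    (halpha0 : forall j, alpha j 0%N = 0)
    (hbeta_pos : forall h, (1 <= h)%N -> 0 < beta h)
    (ainj : forall j h l, h != l -> alpha j h != alpha j l) k a b :
  (forall i, a i <= N)%N -> absorbing a b ->
  G N alpha beta k a b = if [forall i, a i == k i] then 1 else 0.
Proof.
move=> aN /orP [/eqP ->|a0]; first exact: G_b0.
exact: G_a0.
Qed.

Lemma main (R : realType) m N (alpha : 'I_m -> nat -> R) beta
    (halpha0 : forall j, alpha j 0%N = 0)
    (halpha_pos : forall j h, (1 <= h)%N -> 0 < alpha j h)
    (hbeta_pos : forall h, (1 <= h)%N -> 0 < beta h)
    (ainj : forall j h l, h != l -> alpha j h != alpha j l) k fuel :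
  forall a b, (\sum_i a i + b <= fuel)%N -> (forall i, a i <= N)%N ->
  urnP alpha beta fuel a b k = G N alpha beta k a b.
Proof.
elim: fuel => [|f IH] a b hs aN /=.
  case: ifP => Habs; first by rewrite (@absorbing_case _ _ N alpha beta halpha0 hbeta_pos ainj k a b aN Habs).
  by move: Habs; rewrite /absorbing (_ : b = 0%N) //; lia.
case: ifP => Habs; first by rewrite (@absorbing_case _ _ N alpha beta halpha0 hbeta_pos ainj k a b aN Habs).
case: b hs Habs => [|b] hs Habs; first by rewrite /absorbing eqxx in Habs.
have E : forall j, alpha j (a j) / (\sum_(j0 < m) alpha j0 (a j0) + beta b.+1) *
     urnP alpha beta f (decr a j) b.+1 k = alpha j (a j) / (\sum_(j0 < m) alpha j0 (a j0) + beta b.+1) *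
     G N alpha beta k (decr a j) b.+1.
  move=> j; have [aj0|ajp] := posnP (a j); first by rewrite aj0 halpha0 !mul0r.
  rewrite IH //; last by move=> i; have := aN i; rewrite /decr; case: (i =P j); lia.
  by move: hs; rewrite (sum_decr ajp); lia.
under eq_bigr => j _ do rewrite E.
rewrite /= IH //; last by lia.
have W0 : \sum_(j0 < m) alpha j0 (a j0) + beta b.+1 != 0.
  rewrite gt_eqF // ltr_wpDl //; last exact: hbeta_pos.
  by apply: sumr_ge0 => j _; apply: alpha_ge0.
apply: (mulfI W0); rewrite (Rec N halpha0 halpha_pos hbeta_pos ainj) mulrDr mulr_sumr.
congr (_ + _); last by field.
by apply: eq_bigr => j _; field.
Qed.
Theorem theorem3 (R : realType) (m : nat) (hm : (1 <= m)%N)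
    (alpha : 'I_m -> nat -> R) (beta : nat -> R)
    (halpha0 : forall j, alpha j 0%N = 0) (hbeta0 : beta 0%N = 0)
    (halpha_pos : forall j h, (1 <= h)%N -> 0 < alpha j h)
    (hbeta_pos : forall h, (1 <= h)%N -> 0 < beta h)
    (halpha_inj : forall j h l, (1 <= h)%N -> (h < l)%N -> alpha j h != alpha j l)
    (hbeta_inj : forall h l, (1 <= h)%N -> (h < l)%N -> beta h != beta l)
    (a : 'I_m -> nat) (b : nat)
    (ha : forall j, (1 <= a j)%N) (hb : (1 <= b)%N)
    (k : 'I_m -> nat) (hk : forall j, (k j <= a j)%N) :
  urn_prob alpha beta a b k =
  \sum_(l : {ffun 'I_m -> 'I_(\max_(j < m) a j).+1}
          | [forall j, (k j <= l j <= a j)%N])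
    ((\prod_(1 <= f < b.+1) beta f)
       * \prod_(j < m) \prod_((k j).+1 <= h < (a j).+1) alpha j h)
    / ((\prod_(1 <= f < b.+1) (beta f + \sum_(j < m) alpha j (l j)))
       * \prod_(j < m) \prod_(k j <= h < (a j).+1 | h != l j)
            (alpha j h - alpha j (l j))).
Proof.
have ainj := alpha_neq halpha0 halpha_pos halpha_inj.
rewrite /urn_prob (@main _ _ (\max_(j < m) a j) alpha beta halpha0 halpha_pos hbeta_pos ainj) //.
by move=> i; apply: leq_bigmax.
Qed.
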